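(* Assume $p_{i,n}\ge0$ for all $n$ and $i$. Let $\xi_1,\xi_2,\dots$ be independent random variables with $\xi_n\in\{0,1,\dots,m_n\}$ and $\mathbb P\{\xi_n=i\}=p_{i,n}$, and let $\eta=\Delta^{\tilde Q}_{\xi_1\xi_2\dots\xi_n\dots}$. Then the distribution function $F_\eta(x)=\mathbb P\{\eta<x\}$ is $$F_\eta(x)=\begin{cases}0,& x<0,\\ \beta_{i_1(x),1}+\sum_{n=2}^{\infty}\Big[\tilde\beta_{i_n(x),n}\prod_{j=1}^{n-1}\tilde p_{i_j(x),j}\Big],& 0\le x<1,\\ 1,& x\ge1,\end{cases}$$ where $x=\Delta^{-\tilde Q}_{i_1(x)i_2(x)\dots}$.
   Context: Let $(m_n)_{n\ge1}$ be finite nonnegative integers and $\tilde Q=\|q_{i,n}\|$ ($i\in\{0,\dots,m_n\}$) with $q_{i,n}>0$, $\sum_{i}q_{i,n}=1$ for all $n$, and $\prod_n q_{i_n,n}=0$ for every digit sequence $(i_n)$. Put $a_{0,n}=0$, $a_{i,n}=\sum_{l<i}q_{l,n}$; $\Delta^{\tilde Q}_{j_1j_2\dots}=a_{j_1,1}+\sum_{n\ge2}a_{j_n,n}\prod_{l<n}q_{j_l,l}$. The nega-$\tilde Q$-representation $x=\Delta^{-\tilde Q}_{i_1i_2\dots}$ means $x=\Delta^{\tilde Q}_{i_1[m_2-i_2]i_3[m_4-i_4]\dots}$; every $x\in[0,1]$ has one (the formula gives the same value for both representations of a point that has two). Let $P=\|p_{i,n}\|$ have the same shape with $p_{i,n}\in(-1,1)$,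 $\sum_ip_{i,n}=1$, $\prod_n|p_{i_n,n}|=0$ for every digit sequence, $0<\sum_{i<c}p_{i,n}<1$ for $c\in\{1,\dots,m_n\}$. Put $\beta_{0,n}=0$, $\beta_{c,n}=\sum_{i<c}p_{i,n}$; for odd $n$: $\tilde p_{i,n}=p_{i,n}$, $\tilde\beta_{i,n}=\beta_{i,n}$; for even $n$: $\tilde p_{i,n}=p_{m_n-i,n}$, $\tilde\beta_{i,n}=\beta_{m_n-i,n}$. *)

(* Defs.v *)
From HB Require Import structures.
From mathcomp Require Import all_boot all_order all_algebra.
From mathcomp Require Import all_classical all_reals all_analysis.
Set Implicit Arguments. Unset Strict Implicit. Unset Printing Implicit Defensive.
Import Order.TTheory GRing.Theory Num.Theory.
Import numFieldNormedType.Exports.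
Local Open Scope classical_set_scope.
Local Open Scope ring_scope.

(* Conventions: all matrices are functions  (i n : nat) |-> entry  with the
   column index n starting at 1 (the value at n = 0 is irrelevant).
   Digit sequences are functions  d : nat -> nat  read from d 1 on. *)

Definition rseries_from {R : realType} (m : nat) (f : nat -> R) : R :=
  limn (fun N => \sum_(m <= k < N) f k).

Definition digit_seq (m : nat -> nat) (d : nat -> nat) : Prop :=
  forall n, (1 <= n)%N -> (d n <= m n)%N.

Definition inf_prod_zero {R : realType} (f : nat -> R) : Prop :=
  (fun N => \prod_(1 <= n < N) f n) @ \oo --> (0 : R).

(* a_{i,n} = sum_{l<i} q_{l,n}  (also used for beta_{i,n}) *)
Definition cumsum {R : realType} (q : nat -> nat -> R) (i n : nat) : R :=
  \sum_(l < i) q l n.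

Definition DeltaQ {R : realType} (q : nat -> nat -> R) (d : nat -> nat) : R :=
  cumsum q (d 1%N) 1%N +
  rseries_from 2 (fun n => cumsum q (d n) n * \prod_(1 <= l < n) q (d l) l).

(* digits of the Q-representation corresponding to a nega-Q-representation *)
Definition nega_digits (m : nat -> nat) (d : nat -> nat) : nat -> nat :=
  fun n => if odd n then d n else (m n - d n)%N.

Definition is_negaQ_rep {R : realType} (m : nat -> nat) (q : nat -> nat -> R)
  (d : nat -> nat) (x : R) : Prop :=
  digit_seq m d /\ x = DeltaQ q (nega_digits m d).

Definition ptilde {R : realType} (m : nat -> nat) (p : nat -> nat -> R) (i n : nat) : R :=
  if odd n then p i n else p (m n - i)%N n.
Definition betatilde {R : realType} (m : nat -> nat) (p : nat -> nat -> R) (i n : nat) : R :=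
  if odd n then cumsum p i n else cumsum p (m n - i)%N n.

Definition Qtilde_matrix {R : realType} (m : nat -> nat) (q : nat -> nat -> R) : Prop :=
  (forall n i, (1 <= n)%N -> (i <= m n)%N -> 0 < q i n) /\
  (forall n, (1 <= n)%N -> \sum_(i < (m n).+1) q i n = 1) /\
  (forall d, digit_seq m d -> inf_prod_zero (fun n => q (d n) n)).

Definition P_matrix {R : realType} (m : nat -> nat) (p : nat -> nat -> R) : Prop :=
  (forall n i, (1 <= n)%N -> (i <= m n)%N -> -1 < p i n < 1) /\
  (forall n, (1 <= n)%N -> \sum_(i < (m n).+1) p i n = 1) /\
  (forall d, digit_seq m d -> inf_prod_zero (fun n => `|p (d n) n|)) /\
  (forall n c, (1 <= n)%N -> (1 <= c <= m n)%N -> 0 < cumsum p c n < 1).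

(* mutual independence of the nat-valued random variables xi_n, n >= 1
   (discrete sigma-algebra on nat: product rule for every finite family of
   indices and every choice of subsets of nat) *)
Definition mutually_independent {d : measure_display} {T : measurableType d}
  {R : realType} (P : probability T R) (xi : nat -> T -> nat) : Prop :=
  forall (J : seq nat) (A : nat -> set nat),
    uniq J -> all (fun n => (0 < n)%N) J ->
    P [set w | forall n, n \in J -> A n (xi n w)] =
    (\prod_(n <- J) P [set w | A n (xi n w)])%E.

(* Main.v *)
Require Import Defs.
From HB Require Import structures.
From mathcomp Require Import all_boot all_order all_algebra.
From mathcomp Require Import all_classical all_reals all_analysis.
From mathcomp Require Import ring lra.
Import Order.TTheory GRing.Theory Num.Theory.
Import numFieldNormedType.Exports.
Local Open Scope classical_set_scope.
Local Open Scope ring_scope.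
Set Implicit Arguments. Unset Strict Implicit. Unset Printing Implicit Defensive.



Section Alg.
Variable R : realType.
Implicit Types (r : nat -> nat -> R) (d : nat -> nat).

Definition PI r d K := \prod_(1 <= l < K) r (d l) l.
Definition Sm r d K := \sum_(1 <= k < K) cumsum r (d k) k * PI r d k.
Definition cc r d k := 1 - cumsum r (d k) k - r (d k) k.
Definition Cs r d K := \sum_(1 <= k < K) cc r d k * PI r d k.

Lemma PIS r d K : (1 <= K)%N -> PI r d K.+1 = PI r d K * r (d K) K.
Proof. by move=> h; rewrite /PI big_nat_recr. Qed.

Lemma ident r d K : (1 <= K)%N -> Sm r d K + PI r d K + Cs r d K = 1.
Proof.
elim: K => // K IH h.
case: (posnP K) => [->|K0].
  by rewrite /Sm /Cs /PI !big_geq // add0r addr0.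
rewrite /Sm /Cs !big_nat_recr //= -/(Sm r d K) -/(Cs r d K) PIS // /cc.
rewrite -[RHS](IH K0); ring.
Qed.

Definition stoch (m : nat -> nat) r :=
  (forall n i, (1 <= n)%N -> (i <= m n)%N -> 0 <= r i n) /\
  (forall n, (1 <= n)%N -> \sum_(i < (m n).+1) r i n = 1).

Lemma cumsumS r i n : cumsum r i.+1 n = cumsum r i n + r i n.
Proof. by rewrite /cumsum big_ord_recr. Qed.

Lemma cumsum_nat r i n : cumsum r i n = \sum_(0 <= l < i) r l n.
Proof. by rewrite /cumsum big_mkord. Qed.

Variable m : nat -> nat.

Lemma cumsum_ge0 r i n : stoch m r -> (1 <= n)%N -> (i <= (m n).+1)%N -> 0 <= cumsum r i n.
Proof.
move=> [h _] n1 im; rewrite cumsum_nat; rewrite big_nat_cond; apply: sumr_ge0 => l /andP[/andP[_ hl] _].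
apply: h => //; rewrite -ltnS; exact: leq_trans hl im.
Qed.

Lemma cumsum_mono r i j n : forall (hr : stoch m r), (1 <= n)%N -> (i <= j)%N -> (j <= (m n).+1)%N ->
  cumsum r i n <= cumsum r j n.
Proof.
move=> [h _] n1 ij jm; rewrite !cumsum_nat (big_cat_nat (leq0n i) ij) //= lerDl.
rewrite big_nat_cond; apply: sumr_ge0 => l /andP[/andP[_ hl] _]; apply: h => //; rewrite -ltnS; exact: leq_trans hl jm.
Qed.

Lemma cumsum_full r n : stoch m r -> (1 <= n)%N -> cumsum r (m n).+1 n = 1.
Proof. by move=> [_ h] n1; rewrite /cumsum h. Qed.
End Alg.


Section Lim.
Variable R : realType.
Implicit Types (r : nat -> nat -> R) (d : nat -> nat).
Variable m : nat -> nat.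

Lemma PI_ge0 r d K : stoch m r -> digit_seq m d -> 0 <= PI r d K.
Proof.
move=> [h _] hd; rewrite /PI big_nat_cond; apply: prodr_ge0 => l /andP[/andP[l1 _] _].
exact: h (hd _ l1).
Qed.

Lemma cc_ge0 r d k : stoch m r -> digit_seq m d -> (1 <= k)%N -> 0 <= cc r d k.
Proof.
move=> hr hd k1; rewrite /cc -addrA -opprD -cumsumS subr_ge0 -(cumsum_full hr k1).
by apply: (cumsum_mono hr) => //; rewrite ltnS hd.
Qed.

Lemma psum_mono (f : nat -> R) a : (forall k, (a <= k)%N -> 0 <= f k) ->
  {homo (fun K => \sum_(a <= k < K) f k) : K K' / (K <= K')%N >-> K <= K'}.
Proof.
move=> h K K' KK'.
case: (leqP a K) => aK.
  rewrite (big_cat_nat aK KK') /= lerDl big_nat_cond; apply: sumr_ge0 => k /andP[/andP[k1 _] _].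
  by apply: h; exact: leq_trans aK k1.
rewrite big_geq ?(ltnW aK) // big_nat_cond; apply: sumr_ge0 => k /andP[/andP[k1 _] _]; exact: h.
Qed.

Lemma Sm_mono r d : stoch m r -> digit_seq m d ->
  {homo Sm r d : K K' / (K <= K')%N >-> K <= K'}.
Proof.
move=> hr hd; apply: psum_mono => k k1; apply: mulr_ge0; last exact: PI_ge0.
by apply: (cumsum_ge0 hr) => //; apply: leqW; apply: hd.
Qed.

Lemma Cs_mono r d : stoch m r -> digit_seq m d ->
  {homo Cs r d : K K' / (K <= K')%N >-> K <= K'}.
Proof.
move=> hr hd; apply: psum_mono => k k1; apply: mulr_ge0; [exact: cc_ge0|exact: PI_ge0].
Qed.

Lemma Sm_le1 r d K : stoch m r -> digit_seq m d -> Sm r d K <= 1 - Cs r d K.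
Proof.
move=> hr hd; case: (posnP K) => [->|K0].
  by rewrite /Sm /Cs !big_geq // subr0.
have := ident r d K0; have := PI_ge0 K hr hd; lra.
Qed.

Lemma Cs_ge0 r d K : stoch m r -> digit_seq m d -> 0 <= Cs r d K.
Proof. by move=> hr hd; apply: le_trans (Cs_mono hr hd (leq0n K)); rewrite /Cs big_geq. Qed.

Definition Dv r d := cumsum r (d 1%N) 1%N +
  rseries_from 2 (fun n => cumsum r (d n) n * PI r d n).

Lemma DeltaQE q d : DeltaQ q d = Dv q d.
Proof. by []. Qed.

Lemma Scvg r d : stoch m r -> digit_seq m d -> Sm r d @ \oo --> Dv r d.
Proof.
move=> hr hd.
set f := fun n => cumsum r (d n) n * PI r d n.
have f0 : forall k, (1 <= k)%N -> 0 <= f k.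
  move=> k k1; apply: mulr_ge0; last exact: PI_ge0.
  by apply: (cumsum_ge0 hr) => //; apply: leqW; apply: hd.
set T := fun K => \sum_(2 <= k < K) f k.
have Tm : {homo T : K K' / (K <= K')%N >-> K <= K'}.
  by apply: psum_mono => k k2; apply: f0; exact: leq_trans k2.
have SmT : forall K, Sm r d K.+2 = cumsum r (d 1%N) 1%N + T K.+2.
  by move=> K; rewrite /Sm big_ltn // {1}/PI big_geq // mulr1.
have Tcvg : cvgn T.
  apply: nondecreasing_is_cvgn => //; exists 1 => _ [K _ <-].
  case: (ltnP K 2) => K2.
    by rewrite /T big_geq ?ler01 // ltnW.
  have [K' ->] : exists K', K = K'.+2 by exists (K - 2)%N; rewrite -addn2 subnK.
  apply: (@le_trans _ _ (Sm r d K'.+2)); last first.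
    by have := Sm_le1 K'.+2 hr hd; have := Cs_ge0 K'.+2 hr hd; lra.
  rewrite SmT lerDr; have := f0 1%N isT; by rewrite /f /PI big_geq // mulr1.
rewrite -(cvg_shiftn 2).
have -> : [sequence Sm r d (n + 2)]_n = (fun n => cumsum r (d 1%N) 1%N + T (n + 2)%N).
  by apply/funext => n; rewrite /= addn2 SmT.
have H : (fun n => cumsum r (d 1%N) 1%N + T (n+2)%N) @ \oo --> cumsum r (d 1%N) 1%N + limn T.
  apply: cvgD; first exact: cvg_cst.
  by rewrite (cvg_shiftn 2 T); exact: Tcvg.
exact: H.
Qed.

Lemma Dv_ge r d K : stoch m r -> digit_seq m d -> Sm r d K <= Dv r d.
Proof.
move=> hr hd; rewrite -(cvg_lim _ (Scvg hr hd)) //.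
apply: nondecreasing_cvgn_le; first exact: Sm_mono.
by apply/cvg_ex; eexists; exact: Scvg.
Qed.

Lemma Dv_le r d K : stoch m r -> digit_seq m d -> Dv r d <= 1 - Cs r d K.
Proof.
move=> hr hd; rewrite -(cvg_lim _ (Scvg hr hd)) //.
apply: limr_le; first by apply/cvg_ex; eexists; exact: Scvg.
near=> K'.
apply: le_trans (Sm_le1 _ _ _) _ => //; rewrite lerD2l lerN2; apply: Cs_mono => //.
near: K'; exact: nbhs_infty_ge.
Unshelve. all: end_near.
Qed.
End Lim.


Section Cmp.
Variable R : realType.
Implicit Types (r : nat -> nat -> R) (d e : nat -> nat).
Variable m : nat -> nat.

Lemma PI_agree r d e N : (forall l, (1 <= l < N)%N -> d l = e l) -> PI r d N = PI r e N.
Proof. by move=> h; apply: eq_big_nat => l /h ->. Qed.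

Lemma Cs_agree r d e N : (forall l, (1 <= l < N)%N -> d l = e l) -> Cs r d N = Cs r e N.
Proof.
move=> h; apply: eq_big_nat => l hl; rewrite /cc (h _ hl); congr (_ * _); apply: PI_agree.
move=> l' /andP[l1 l2]; apply: h; rewrite l1 /=; exact: ltn_trans l2 (proj2 (andP hl)).
Qed.

Lemma Dv_ext r d e : (forall n, (1 <= n)%N -> d n = e n) -> Dv r d = Dv r e.
Proof.
move=> h; rewrite /Dv /rseries_from h //; congr (_ + limn _).
apply/funext => N; apply: eq_big_nat => k /andP[k2 _].
have k1 : (1 <= k)%N by exact: ltnW.
rewrite h //; congr (_ * _); apply: PI_agree => l /andP[l1 _]; exact: h.
Qed.

Lemma Dv_ge0 r d : stoch m r -> digit_seq m d -> 0 <= Dv r d.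
Proof. by move=> hr hd; apply: le_trans (Dv_ge 0 hr hd); rewrite /Sm big_geq. Qed.

Variable q : nat -> nat -> R.
Hypothesis hq : stoch m q.
Hypothesis qp : forall n i, (1 <= n)%N -> (i <= m n)%N -> 0 < q i n.

Lemma PI_gt0 d K : digit_seq m d -> 0 < PI q d K.
Proof.
move=> hd; rewrite /PI big_nat_cond; apply: prodr_gt0 => l /andP[/andP[l1 _] _].
exact: qp (hd _ l1).
Qed.

Lemma cc_gt0 d k : digit_seq m d -> (1 <= k)%N -> (d k < m k)%N -> 0 < cc q d k.
Proof.
move=> hd k1 dk; rewrite /cc -addrA -opprD -cumsumS subr_gt0.
have h1 := cumsum_full hq k1; rewrite cumsumS in h1.
have h2 : cumsum q (d k).+1 k <= cumsum q (m k) k.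
  by apply: (cumsum_mono hq) => //; exact: leqnSn.
have := qp k1 (leqnn (m k)); lra.
Qed.

Lemma cmp_base d e N : digit_seq m d -> digit_seq m e -> (1 <= N)%N ->
  (forall l, (1 <= l < N)%N -> d l = e l) -> (d N < e N)%N ->
  1 - Cs q d N.+1 <= Sm q e N.+1.
Proof.
move=> hd he N1 hde dN.
have i1 := ident q e (ltn0Sn N).
have ec := Cs_agree q hde; have ep := PI_agree q hde.
have Cd : Cs q d N.+1 = Cs q d N + cc q d N * PI q d N by rewrite /Cs big_nat_recr.
have Ce : Cs q e N.+1 = Cs q e N + cc q e N * PI q e N by rewrite /Cs big_nat_recr.
have Se : Sm q e N.+1 = Sm q e N + cumsum q (e N) N * PI q e N by rewrite /Sm big_nat_recr.
rewrite Cd; rewrite Ce PIS // in i1.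
have h2 : cumsum q (d N).+1 N <= cumsum q (e N) N.
  by apply: (cumsum_mono hq) => //; apply: leqW; exact: he.
have hp := PI_ge0 N hq hd.
rewrite /cc in i1 *; rewrite cumsumS in h2; rewrite Se.
have : (cumsum q (d N) N + q (d N) N) * PI q d N <= cumsum q (e N) N * PI q d N.
  by apply: ler_wpM2r.
rewrite ep ec in i1 *; nra.
Qed.

Lemma cmp1 d e N : digit_seq m d -> digit_seq m e -> (1 <= N)%N ->
  (forall l, (1 <= l < N)%N -> d l = e l) -> (d N < e N)%N -> Dv q d <= Dv q e.
Proof.
move=> hd he N1 hde dN.
apply: le_trans (Dv_le N.+1 hq hd) _; apply: le_trans (cmp_base hd he N1 hde dN) _.
exact: (Dv_ge N.+1 hq he).
Qed.

Lemma lt1 d k : digit_seq m d -> (1 <= k)%N -> (d k < m k)%N -> Dv q d < 1 - Cs q d k.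
Proof.
move=> hd k1 dk; apply: le_lt_trans (Dv_le k.+1 hq hd) _.
have -> : Cs q d k.+1 = Cs q d k + cc q d k * PI q d k by rewrite /Cs big_nat_recr.
have := Cs_ge0 k hq hd.
have := cc_gt0 hd k1 dk; have := PI_gt0 k hd.
move=> a b c; have := mulr_gt0 b a; lra.
Qed.

Lemma cmp2 d e N : digit_seq m d -> digit_seq m e -> (1 <= N)%N ->
  (forall l, (1 <= l < N)%N -> d l = e l) -> (d N < e N)%N -> Dv q e <= Dv q d ->
  forall k, (N < k)%N -> d k = m k.
Proof.
move=> hd he N1 hde dN hle k Nk.
have k1 : (1 <= k)%N by exact: leq_ltn_trans Nk.
case: (ltngtP (d k) (m k)) => // [dk|]; last by rewrite ltnNge hd.
have h1 := lt1 hd k1 dk.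
have h2 := Cs_mono hq hd Nk.
have h3 := cmp_base hd he N1 hde dN.
have h4 := Dv_ge N.+1 hq he.
exfalso; lra.
Qed.
End Cmp.


Section Prob.
Variable R : realType.
Variable m : nat -> nat.
Variables (p : nat -> nat -> R) (dd : measure_display) (T : measurableType dd).
Variables (P : probability T R) (xi : nat -> T -> nat).
Hypothesis hp : stoch m p.
Hypothesis pinf : forall e, digit_seq m e -> inf_prod_zero (fun n => `|p (e n) n|).
Hypothesis hmeas : forall n (A : set nat), measurable [set w | A (xi n w)].
Hypothesis hxi : forall n w, (1 <= n)%N -> (xi n w <= m n)%N.
Hypothesis hP : forall n i, (1 <= n)%N -> (i <= m n)%N -> P [set w | xi n w = i] = (p i n)%:E.
Hypothesis hind : mutually_independent P xi.

Lemma meas_all (B : nat -> nat -> Prop) : measurable [set w | forall n, B n (xi n w)].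
Proof.
have -> : [set w | forall n, B n (xi n w)] = \bigcap_n [set w | B n (xi n w)].
  by apply/seteqP; split => w /= h; [move=> n _; exact: h | move=> n; exact: h n I].
by apply: bigcapT_measurable => n; exact: hmeas.
Qed.

Lemma prob_cyl K (A : nat -> set nat) :
  P [set w | forall n, n \in index_iota 1 K -> A n (xi n w)] =
  (\prod_(1 <= n < K) P [set w | A n (xi n w)])%E.
Proof.
apply: hind; first exact: iota_uniq.
by apply/allP => n; rewrite mem_index_iota => /andP[].
Qed.

Lemma P_lt N c : (1 <= N)%N -> (c <= (m N).+1)%N ->
  P [set w | (xi N w < c)%N] = (cumsum p c N)%:E.
Proof.
move=> N1; elim: c => [_|c IH cm].
  have -> : [set w | (xi N w < 0)%N] = set0 by apply/seteqP; split => w.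
  by rewrite measure0 /cumsum big_ord0.
have -> : [set w | (xi N w < c.+1)%N] = [set w | (xi N w < c)%N] `|` [set w | xi N w = c].
  apply/seteqP; split => w /=; first by rewrite ltnS leq_eqVlt => /orP[/eqP|]; [right|left].
  by case=> [/ltnW|->] //; rewrite ltnS.
rewrite measureU; first by rewrite cumsumS EFinD; congr (_ + _)%E; [exact: (IH (ltnW cm)) | exact: hP].
- exact: (hmeas N (fun k => (k < c)%N)).
- exact: (hmeas N (fun k => k = c)).
by apply/seteqP; split => w // [/= h1 h2]; move: h1; rewrite h2 ltnn.
Qed.

Definition U (e : nat -> nat) := [set w | forall n, (1 <= n)%N -> xi n w = e n].

Lemma U_meas e : measurable (U e).
Proof. exact: (meas_all (fun n k => (1 <= n)%N -> k = e n)). Qed.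

Lemma PI_p_cvg e : digit_seq m e -> PI p e @ \oo --> 0.
Proof.
move=> he; have := pinf he; rewrite /inf_prod_zero.
have -> : (fun N => \prod_(1 <= n < N) `|p (e n) n|) = PI p e; last by [].
apply/funext => N; apply: eq_big_nat => n /andP[n1 _].
by rewrite ger0_norm //; case: hp => h _; apply: h => //; exact: he.
Qed.

Lemma U_null e : digit_seq m e -> P (U e) = 0%E.
Proof.
move=> he.
have hK : forall K, (P (U e) <= (PI p e K)%:E)%E.
  move=> K.
  apply: (@le_trans _ _ (P [set w | forall n, n \in index_iota 1 K -> [set e n] (xi n w)])).
    apply: le_measure; rewrite ?inE; [exact: U_meas| |].
      exact: (meas_all (fun n k => n \in index_iota 1 K -> [set e n] k)).
    move=> w hw n; rewrite mem_index_iota => /andP[n1 _]; exact: hw.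
  rewrite (prob_cyl K (fun n => [set e n])) /PI -prodEFin le_eqVlt; apply/orP; left; apply/eqP.
  apply: eq_big_nat => n /andP[n1 _]; exact: hP (he _ n1).
have h1 := hK 0%N; rewrite /PI big_geq // in h1.
have h0 : (0 <= P (U e))%E by exact: measure_ge0.
move: h0 h1 hK; case: (P (U e)) => // u; rewrite !lee_fin => u0 _ hK.
apply/eqP; rewrite eqe eq_le u0 andbT.
have <- : limn (PI p e) = 0 by apply: cvg_lim => //; exact: PI_p_cvg.
apply: limr_ge; first by apply/cvg_ex; eexists; exact: PI_p_cvg.
by near=> K; rewrite -lee_fin; exact: hK.
Unshelve. all: end_near.
Qed.
End Prob.


Section Main.
Variable R : realType.
Variable m : nat -> nat.
Variables (q p : nat -> nat -> R) (dd : measure_display) (T : measurableType dd).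
Variables (P : probability T R) (xi : nat -> T -> nat).
Hypothesis hq : stoch m q.
Hypothesis qp : forall n i, (1 <= n)%N -> (i <= m n)%N -> 0 < q i n.
Hypothesis hp : stoch m p.
Hypothesis pinf : forall e, digit_seq m e -> inf_prod_zero (fun n => `|p (e n) n|).
Hypothesis hmeas : forall n (A : set nat), measurable [set w | A (xi n w)].
Hypothesis hxi : forall n w, (1 <= n)%N -> (xi n w <= m n)%N.
Hypothesis hP : forall n i, (1 <= n)%N -> (i <= m n)%N -> P [set w | xi n w = i] = (p i n)%:E.
Hypothesis hind : mutually_independent P xi.

Definition xs w := fun n => xi n w.
Lemma hxs w : digit_seq m (xs w).
Proof. by move=> n n1; exact: hxi. Qed.

Variable j : nat -> nat.
Hypothesis hj : digit_seq m j.

Definition AB N n : set nat := if (n <= N)%N then [set j n] else [set k | (k < j N.+1)%N].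
Definition B N := [set w | forall n, n \in index_iota 1 N.+2 -> AB N n (xi n w)].

Lemma B_mem N w : B N w <-> (forall l, (1 <= l <= N)%N -> xi l w = j l) /\ (xi N.+1 w < j N.+1)%N.
Proof.
split.
  move=> h; split.
    move=> l /andP[l1 lN]; have := h l; rewrite /AB lN mem_index_iota l1 /=.
    by apply; rewrite ltnS; exact: leqW.
  by have := h N.+1; rewrite /AB ltnn mem_index_iota /=; apply.
move=> [h1 h2] n; rewrite mem_index_iota /AB => /andP[n1 n2].
by case: ifP => nN; [apply: h1; rewrite n1 nN | have -> : n = N.+1 by apply/eqP; rewrite eqn_leq -ltnS n2 ltnNge nN].
Qed.

Lemma B_meas N : measurable (B N).
Proof. exact: (meas_all hmeas (fun n k => n \in index_iota 1 N.+2 -> AB N n k)). Qed.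

Lemma PB N : P (B N) = (cumsum p (j N.+1) N.+1 * PI p j N.+1)%:E.
Proof.
rewrite /B (prob_cyl hind N.+2 (AB N)) big_nat_recr //= mulrC EFinM; congr (_ * _)%E.
  rewrite /PI -prodEFin; apply: eq_big_nat => n /andP[n1 nN].
  by rewrite /AB -ltnS nN; apply: hP => //; exact: hj.
rewrite /AB ltnn; apply: (P_lt hmeas hP) => //; apply: leqW; exact: hj.
Qed.

Lemma B_triv : trivIset setT B.
Proof.
move=> a b _ _ [w [/B_mem [ha1 ha2] /B_mem [hb1 hb2]]].
case: (ltngtP a b) => // ab; exfalso.
  by move: ha2; rewrite hb1 ?ltnn // ab.
by move: hb2; rewrite ha1 ?ltnn // ab.
Qed.

Lemma A_sub : [set w | Dv q (xs w) < Dv q j] `<=` \bigcup_N B N.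
Proof.
move=> w /= hlt.
have ex : exists n, (1 <= n)%N && (xi n w != j n).
  case: (pselect (exists n, (1 <= n)%N && (xi n w != j n))) => // nex.
  exfalso; move: hlt; rewrite (@Dv_ext _ q (xs w) j) ?ltxx //.
  move=> n n1; rewrite /xs; case: (eqVneq (xi n w) (j n)) => // hne; exfalso; apply: nex; exists n; by rewrite n1 hne.
case: (ex_minnP ex) => n /andP[n1 hne] hmin.
have [N nE] : exists N, n = N.+1 by exists n.-1; rewrite prednK.
subst n.
have agree : forall l, (1 <= l <= N)%N -> xi l w = j l.
  move=> l /andP[l1 lN]; case: (eqVneq (xi l w) (j l)) => // hl; exfalso.
  by have := hmin l; rewrite l1 hl /= => /(_ isT); rewrite ltnNge lN.
case: (ltngtP (xi N.+1 w) (j N.+1)) => hc.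
- by exists N => //; apply/B_mem.
- exfalso; move: hlt; apply/negP; rewrite -leNgt.
  apply: (cmp1 hq hj (hxs w) (ltn0Sn N)) => // l /andP[l1 lN].
  by rewrite /xs agree // l1 -ltnS.
- by move: hne; rewrite hc eqxx.
Qed.


Definition eN N r := fun n => if (n <= N)%N then j n else if n == N.+1 then minn r (m n) else m n.

Lemma eN_digit N r : digit_seq m (eN N r).
Proof.
move=> n n1; rewrite /eN; case: ifP => _; first exact: hj.
by case: eqP => _; [exact: geq_minr | exact: leqnn].
Qed.

Definition W := \bigcup_N \bigcup_r U xi (eN N r).
Definition A := [set w | Dv q (xs w) < Dv q j].

Lemma W_meas : measurable W.
Proof. by apply: bigcupT_measurable => N; apply: bigcupT_measurable => r; exact: U_meas. Qed.

Lemma null_bigcup (F : nat -> set T) : (forall n, measurable (F n)) ->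
  (forall n, P (F n) = 0%E) -> P (\bigcup_n F n) = 0%E.
Proof.
move=> mF F0; apply/eqP; rewrite eq_le measure_ge0 andbT.
apply: le_trans (measure_sigma_subadditive P mF (bigcupT_measurable _ mF) (@subset_refl _ _)) _.
by rewrite eseries0 // => n _ _; exact: F0.
Qed.

Lemma W_null : P W = 0%E.
Proof.
apply: null_bigcup => [N|N].
  by apply: bigcupT_measurable => r; exact: U_meas.
apply: null_bigcup => [r|r]; first exact: U_meas.
exact: (U_null hp pinf hmeas hP hind (eN_digit N r)).
Qed.

Lemma B_sub : \bigcup_N B N `<=` A `|` W.
Proof.
move=> w [N _ /B_mem [h1 h2]].
case: (boolP (Dv q (xs w) < Dv q j)) => hc; [by left | right].
rewrite -leNgt in hc.
have ag : forall l, (1 <= l < N.+1)%N -> xs w l = j l.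
  by move=> l /andP[l1 lN]; apply: h1; rewrite l1 -ltnS.
have tail := cmp2 hq qp (hxs w) hj (ltn0Sn N) ag h2 hc.
exists N => //; exists (xi N.+1 w) => //.
move=> n n1; rewrite /eN; case: ifP => nN; first by apply: h1; rewrite n1 nN.
case: eqP => [->|ne]; first by symmetry; apply/minn_idPl; exact: hxi.
apply: tail; rewrite ltn_neqAle ltnNge nN andbT eq_sym.
by apply/eqP => e; apply: ne; rewrite e.
Qed.

Lemma AU_meas e : digit_seq m e -> measurable (A `&` U xi e).
Proof.
move=> he; case: (pselect (Dv q e < Dv q j)) => hc.
  have -> : A `&` U xi e = U xi e; last exact: U_meas.
  apply/seteqP; split => w; first by case.
  move=> hw; split => //; rewrite /A /=.
  by rewrite (@Dv_ext _ q (xs w) e).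
have -> : A `&` U xi e = set0; last exact: measurable0.
apply/seteqP; split => w // [hA hw]; apply: hc.
by move: hA; rewrite /A /= (@Dv_ext _ q (xs w) e).
Qed.

Lemma A_meas : measurable A.
Proof.
have -> : A = ((\bigcup_N B N) `\` W) `|` \bigcup_N \bigcup_r (A `&` U xi (eN N r)).
  apply/seteqP; split => w.
    move=> hA; case: (pselect (W w)) => hW.
      by right; case: hW => N _ [r _ hr]; exists N => //; exists r.
    by left; split => //; exact: A_sub.
  case=> [[hB hW]|[N _ [r _ [hA _]]]] //.
  by case: (B_sub hB).
apply: measurableU.
  apply: measurableD; last exact: W_meas.
  by apply: bigcupT_measurable => N; exact: B_meas.
by apply: bigcupT_measurable => N; apply: bigcupT_measurable => r; exact: AU_meas (eN_digit N r).
Qed.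

Lemma PA : P A = P (\bigcup_N B N).
Proof.
have mB : measurable (\bigcup_N B N) by apply: bigcupT_measurable => N; exact: B_meas.
apply/eqP; rewrite eq_le; apply/andP; split.
  by apply: le_measure; rewrite ?inE //; [exact: A_meas | exact: A_sub].
apply: (@le_trans _ _ (P (A `|` W))).
  by apply: le_measure; rewrite ?inE //; [apply: measurableU; [exact: A_meas|exact: W_meas]| exact: B_sub].
have h : (P (A `|` W) <= P A + P W)%E := measureU2 P A_meas W_meas.
by rewrite W_null adde0 in h.
Qed.

Lemma PBU : P (\bigcup_N B N) = (Dv p j)%:E.
Proof.
have mB : measurable (\bigcup_N B N) by apply: bigcupT_measurable => N; exact: B_meas.
have h : P (\bigcup_N B N) = (\sum_(0 <= N <oo) P (B N))%E := measure_semi_bigcup P B_meas B_triv mB.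
rewrite h (eq_eseriesr (fun N _ => PB N)).
have -> : (fun K => (\sum_(0 <= N < K) (cumsum p (j N.+1) N.+1 * PI p j N.+1)%:E)%E)
   = EFin \o (fun K => Sm p j K.+1).
  apply/funext => K; rewrite sumEFin /=; congr EFin.
  elim: K => [|K IH]; first by rewrite /Sm !big_geq.
  rewrite big_nat_recr //= IH /Sm (big_nat_recr K.+1) //=.
have cv : (fun K => Sm p j K.+1) @ \oo --> Dv p j.
  by rewrite (cvg_shiftS (Sm p j)); exact: (Scvg hp hj).
rewrite EFin_lim; last by apply/cvg_ex; eexists; exact: cv.
by rewrite (cvg_lim _ cv).
Qed.
End Main.

Unset Implicit Arguments.
Theorem mainTheorem10 (R : realType) (m : nat -> nat) (q p : nat -> nat -> R)
  (d : measure_display) (T : measurableType d) (P : probability T R)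
  (xi : nat -> T -> nat) :
  Qtilde_matrix m q ->
  P_matrix m p ->
  (forall n i, (1 <= n)%N -> (i <= m n)%N -> 0 <= p i n) ->
  (forall n (A : set nat), measurable [set w | A (xi n w)]) ->
  (forall n w, (1 <= n)%N -> (xi n w <= m n)%N) ->
  (forall n i, (1 <= n)%N -> (i <= m n)%N -> P [set w | xi n w = i] = (p i n)%:E) ->
  mutually_independent P xi ->
  let eta := fun w => DeltaQ q (fun n => xi n w) in
  let F := fun x : R => P [set w | eta w < x] in
  (forall x : R, x < 0 -> F x = 0%E) /\
  (forall (x : R) (i : nat -> nat), 0 <= x < 1 -> is_negaQ_rep m q i x ->
     F x = (cumsum p (i 1%N) 1%N +
            rseries_from 2 (fun n => betatilde m p (i n) n *
                                     \prod_(1 <= j < n) ptilde m p (i j) j))%:E) /\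
  (forall x : R, 1 <= x -> F x = 1%E).
Proof.
move=> [qpos [qsum _]] [_ [psum [pinf _]]] pnn hmeas hxi hP hind eta F.
have hq : stoch m q by split => // n i n1 im; apply: ltW; exact: qpos.
have hp : stoch m p by [].
split; [|split].
- move=> x x0; rewrite /F.
  have -> : [set w | eta w < x] = set0.
    apply/seteqP; split => w //= h.
    have := Dv_ge0 hq (hxs hxi w); rewrite /eta DeltaQE in h; rewrite /xs; lra.
  exact: measure0.
- move=> x i _ [hi xE]; rewrite /F.
  set j := nega_digits m i.
  have hj : digit_seq m j.
    move=> n n1; rewrite /j /nega_digits; case: ifP => _; [exact: hi | exact: leq_subr].
  have -> : [set w | eta w < x] = A q xi j by rewrite xE.
  rewrite (PA hq qpos hp pinf hmeas hxi hP hind hj) (PBU hp hmeas hP hind hj).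
  congr EFin; rewrite /Dv; congr (_ + rseries_from _ _).
  apply/funext => n; congr (_ * _).
    by rewrite /betatilde /j /nega_digits; case: ifP.
  apply: eq_bigr => l _; by rewrite /ptilde /j /nega_digits; case: ifP.
- move=> x x1; rewrite /F.
  set Um := U xi m.
  have hm : digit_seq m m by [].
  have sub : ~` Um `<=` [set w | eta w < x].
    move=> w /= hw.
    have [n /andP[n1 hn]] : exists n, (1 <= n)%N && (xi n w != m n).
      case: (pselect (exists n, (1 <= n)%N && (xi n w != m n))) => // nex.
      exfalso; apply: hw => n n1; case: (eqVneq (xi n w) (m n)) => // hne.
      by exfalso; apply: nex; exists n; rewrite n1 hne.
    have hlt : (xi n w < m n)%N by rewrite ltn_neqAle hn hxi.
    have := lt1 hq qpos (hxs hxi w) n1 hlt.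
    have := Cs_ge0 n hq (hxs hxi w).
    rewrite /eta DeltaQE /xs; lra.
  have mA : measurable [set w | eta w < x].
    have -> : [set w | eta w < x] = ~` Um `|` ([set w | eta w < x] `&` Um).
      apply/seteqP; split => w.
        by move=> h; case: (pselect (Um w)) => hw; [right|left].
      by case=> [/sub|[]].
    apply: measurableU; first by apply: measurableC; exact: U_meas.
    case: (pselect (Dv q m < x)) => hc.
      have -> : [set w | eta w < x] `&` Um = Um; last exact: U_meas.
      apply/seteqP; split => w; first by case.
      by move=> hw; split => //; rewrite /= /eta DeltaQE (@Dv_ext _ q (xs xi w) m).
    have -> : [set w | eta w < x] `&` Um = set0; last exact: measurable0.
    apply/seteqP; split => w // [hA hw]; apply: hc.
    by move: hA; rewrite /= /eta DeltaQE (@Dv_ext _ q (xs xi w) m).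
  apply/eqP; rewrite eq_le; apply/andP; split; first exact: probability_le1.
  have h1 : P (~` Um) = (1 - P Um)%E := probability_setC P (U_meas hmeas m).
  rewrite (U_null hp pinf hmeas hP hind hm) sube0 in h1.
  rewrite -h1; apply: le_measure; rewrite ?inE //.
  by apply: measurableC; exact: U_meas.
Qed.
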